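(* Let $C_1$ be a binary singly-even self-dual $(n,k,d)$-code and $C_2$ a binary doubly-even self-dual code of length $n$. Suppose $C_1$ and $C_2$ are neighbors, and let $C_{k-1}=C_1\cap C_2$ (their common maximal doubly-even subcode). Then every codeword $c\in C_{k-1}^{\perp}$ of weight $w(c)\equiv 2\pmod 4$ satisfies $d\le w(c)\le n-d$.
   Context: Codes are binary linear codes in $\mathbb{F}_2^n$ with the standard inner product $\sum_i x_iy_i\in\mathbb{F}_2$; $D^\perp$ denotes the dual code of $D$, and $C$ is self-dual if $C=C^\perp$ (then $k=n/2$). An $(n,k,d)$-code has length $n$, dimension $k$, minimum distance $d$. The weight $w(x)$ is the number of nonzero coordinates. A self-dual code is singly-even if it contains a codeword of weight $\equiv 2\pmod 4$, and doubly-even if all codewords have weight divisible by $4$. Two self-dual codes of length $n$ are neighbors if their intersection has dimension $n/2-1$. *)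

(* Defs.v *)
From HB Require Import structures.
From mathcomp Require Import all_boot all_order all_algebra.
Set Implicit Arguments. Unset Strict Implicit. Unset Printing Implicit Defensive.
Import GRing.Theory.
Local Open Scope ring_scope.

Notation word n := 'rV['F_2]_n.
Notation code n := {vspace 'rV['F_2]_n}.

Definition dotw n (x y : word n) : 'F_2 := \sum_(i < n) x 0 i * y 0 i.

Definition wt n (x : word n) : nat := #|[set i : 'I_n | x 0 i != 0]|.

Definition in_dual n (D : code n) (x : word n) : Prop :=
  forall y, y \in D -> dotw x y = 0.

Definition self_dual n (C : code n) : Prop :=
  forall x : word n, x \in C <-> in_dual C x.

Definition singly_even n (C : code n) : Prop :=
  exists2 x, x \in C & (wt x %% 4 = 2)%N.

Definition doubly_even n (C : code n) : Prop :=
  forall x, x \in C -> (wt x %% 4 = 0)%N.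

Definition min_dist n (C : code n) (d : nat) : Prop :=
  (exists x, exists y, [/\ x \in C, y \in C, x != y & wt (x - y) = d]) /\
  (forall x y, x \in C -> y \in C -> x != y -> (d <= wt (x - y))%N).

Definition nkd_code n (C : code n) (k d : nat) : Prop :=
  (\dim C = k)%N /\ min_dist C d.

Definition neighbors n (C1 C2 : code n) : Prop :=
  (\dim (C1 :&: C2) = n./2 - 1)%N.

(* Main.v *)
Require Import Defs.
From mathcomp Require Import all_boot all_order all_algebra.
From mathcomp Require Import zify.
Set Implicit Arguments. Unset Strict Implicit. Unset Printing Implicit Defensive.
Import GRing.Theory.
Local Open Scope ring_scope.

Lemma F2_cases (a : 'F_2) : a = 0 \/ a = 1.
Proof. case: a => [[|[|k]]] //= H; [left|right]; exact: val_inj. Qed.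

Definition ov n (x y : word n) : nat :=
  #|[set i : 'I_n | (x 0 i != 0) && (y 0 i != 0)]|.

Lemma card_sum n (P : pred 'I_n) : #|[set i | P i]| = (\sum_(i < n) (P i : nat))%N.
Proof. by rewrite -sum1_card big_mkcond /=; apply: eq_bigr => i _; rewrite inE; case: (P i). Qed.

Lemma wtD n (x y : word n) : (wt (x + y) + 2 * ov x y = wt x + wt y)%N.
Proof.
rewrite /wt /ov !card_sum big_distrr /= -!big_split /=; apply: eq_bigr => i _.
rewrite mxE; by case: (F2_cases (x 0 i)) => ->; case: (F2_cases (y 0 i)) => ->.
Qed.

Lemma dotw_ov n (x y : word n) : dotw x y = (ov x y)%:R.
Proof.
rewrite /dotw /ov card_sum natr_sum; apply: eq_bigr => i _.
case: (F2_cases (x 0 i)) => ->; case: (F2_cases (y 0 i)) => ->; rewrite /= ?mulr0 ?mul0r ?mulr1. all: done.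
Qed.

Lemma F2_nat0 k : ((k%:R : 'F_2) = 0) <-> ~~ odd k.
Proof.
by rewrite -(Fp_nat_mod (p:=2)) // modn2; case: (odd k).
Qed.

Lemma ovC n (x y : word n) : ov x y = ov y x.
Proof. by rewrite /ov; apply: eq_card => i; rewrite !inE andbC. Qed.

Lemma dotwC n (x y : word n) : dotw x y = dotw y x.
Proof. by rewrite !dotw_ov ovC. Qed.

Lemma dotwDl n (x y z : word n) : dotw (x + y) z = dotw x z + dotw y z.
Proof. by rewrite /dotw -big_split; apply: eq_bigr => i _; rewrite mxE mulrDl. Qed.

Lemma dotwZl n k (x z : word n) : dotw (k *: x) z = k * dotw x z.
Proof. by rewrite /dotw mulr_sumr; apply: eq_bigr => i _; rewrite mxE mulrA. Qed.

Lemma dotw_suml n m (k : 'I_m -> 'F_2) (X : 'I_m -> word n) z :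
  dotw (\sum_i k i *: X i) z = \sum_i k i * dotw (X i) z.
Proof.
elim/big_rec2: _ => [|i a b _ <-]; first by rewrite /dotw big1 // => i _; rewrite mxE mul0r.
by rewrite dotwDl dotwZl.
Qed.
Lemma dual_space n (D : code n) :
  exists Dp : code n, (forall x, x \in Dp <-> in_dual D x) /\ \dim Dp = (n - \dim D)%N.
Proof.
set m := \dim D; set b := vbasis D.
pose B : 'M['F_2]_(n, m) := \matrix_(k, i) (b`_i) 0 k.
have HB x i : (x *m B) 0 i = dotw x b`_i.
  by rewrite mxE; apply: eq_bigr => k _; rewrite mxE.
pose f : 'Hom(word n, 'rV['F_2]_m) := linfun (mulmxr B).
have fE (x : word n) : f x = x *m B by rewrite lfunE.
exists (lker f); split.
  move=> x; rewrite memv_ker fE; split.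
    move/eqP => H y yD; rewrite (coord_vbasis yD) dotwC dotw_suml big1 // => i _.
    by rewrite dotwC -HB H mxE mulr0.
  move=> H; apply/eqP/rowP => i; rewrite HB mxE; apply: H; apply: vbasis_mem.
  by apply: mem_nth; rewrite size_tuple.
have rB : \rank B = m.
  rewrite -mxrank_tr; apply/eqP; change (row_free B^T); rewrite -kermx_eq0; apply/eqP/row_matrixP => i.
  rewrite row0; set u := row i (kermx B^T).
  have : u *m B^T = 0 by rewrite /u -row_mul mulmx_ker row0.
  rewrite mulmx_sum_row => Hu; apply/rowP => j; rewrite [RHS]mxE.
  move/freeP: (basis_free (vbasisP D)) => /(_ (fun j => u 0 j)) -> //.
  rewrite -[RHS]Hu; apply: eq_bigr => j0 _; congr (_ *: _); apply/rowP => k.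
  by rewrite !mxE.
have Himg : \dim (f @: fullv) = m.
  apply/eqP; rewrite eqn_leq; apply/andP; split.
    by have := dimvS (subvf (f @: fullv)); rewrite dimvf /dim /= mul1n.
  have dfm : \dim (fullv : {vspace 'rV['F_2]_m}) = m by rewrite dimvf /dim /= mul1n.
  apply: (@leq_trans (\dim (fullv : {vspace 'rV['F_2]_m}))); first by rewrite dfm.
  apply: dimvS; apply/subvP => t _.
  have : (t <= B)%MS by apply: submx_full; rewrite /row_full rB.
  case/submxP => u ->; rewrite -fE; apply: memv_img; exact: memvf.
have := limg_ker_dim f fullv; rewrite capfv dimvf /dim /= mul1n Himg.
move=> H; rewrite -[in RHS]H; by rewrite addnK.
Qed.

Lemma mod4_even n (x y : word n) : dotw x y = 0 ->
  (wt (x + y) %% 4 = (wt x + wt y) %% 4)%N.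
Proof.
rewrite dotw_ov => /F2_nat0 H; have := wtD x y.
have := odd_double_half (ov x y); rewrite (negbTE H) add0n -muln2 => E.
rewrite -E; lia.
Qed.

Lemma mod4_odd n (x y : word n) : dotw x y != 0 ->
  (wt (x + y) %% 4 = (wt x + wt y + 2) %% 4)%N.
Proof.
rewrite dotw_ov => H.
have H' : odd (ov x y) by apply/negPn/negP => /F2_nat0 Hc; rewrite Hc eqxx in H.
have := wtD x y.
have := odd_double_half (ov x y); rewrite H' -muln2 => E.
rewrite -E; lia.
Qed.

Lemma wt0 n : wt (0 : word n) = 0%N.
Proof. by rewrite /wt card_sum big1 // => i _; rewrite mxE eqxx. Qed.

Definition all1 {n} : word n := const_mx 1.

Lemma ov_all1 n (y : word n) : ov all1 y = wt y.
Proof. by rewrite /ov /wt; apply: eq_card => i; rewrite !inE mxE oner_eq0. Qed.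

Lemma ov_diag n (y : word n) : ov y y = wt y.
Proof. by rewrite /ov /wt; apply: eq_card => i; rewrite !inE andbb. Qed.

Lemma wt_all1 n : wt (all1 : word n) = n.
Proof. by rewrite -ov_all1 ov_diag /wt; rewrite card_sum (eq_bigr (fun _ => 1%N)) ?sum1_card ?card_ord // => i _; rewrite mxE oner_eq0. Qed.

Lemma wtN n (x : word n) : wt (- x) = wt x.
Proof. by rewrite /wt; apply: eq_card => i; rewrite !inE mxE oppr_eq0. Qed.

Lemma all1_in n (C : code n) : self_dual C -> all1 \in C.
Proof.
move=> sd; apply/sd => y yC.
have := (proj1 (sd y) yC) y yC.
by rewrite !dotw_ov ov_all1 ov_diag.
Qed.

Lemma sd_dim n (C : code n) : self_dual C -> \dim C = (n - \dim C)%N.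
Proof.
move=> sd; have [Dp [mD dD]] := dual_space C.
suff E : Dp = C by rewrite -{1}E.
apply/vspaceP => x; apply/idP/idP => H; [apply/sd/mD | apply/mD/sd] => //.
Qed.

Lemma split_line n (C C1 : code n) a : (C <= C1)%VS -> \dim C = (\dim C1).-1 ->
  a \in C1 -> a \notin C -> forall y, y \in C1 -> exists z k, z \in C /\ y = z + k *: a.
Proof.
move=> sub dimC aC1 aC y yC1.
have S : (C + <[a]> <= C1)%VS by rewrite subv_add sub -memvE.
have aS : a \in (C + <[a]>)%VS by rewrite memvE addvSr.
have E : (C + <[a]>)%VS = C1.
  apply/eqP; rewrite eqEdim S /=.
  have : (\dim C < \dim (C + <[a]>))%N.
    rewrite ltnNge; apply/negP => le.
    have : (C == C + <[a]>)%VS by rewrite eqEdim addvSl le.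
    by move/eqP => e; move: aC; rewrite e aS.
  lia.
rewrite -E in yC1; case/memv_addP: yC1 => z zC [w wl ->]; case/vlineP: wl => k ->.
by exists z, k.
Qed.

Lemma ar1 (x y : nat) : (x %% 4 = 0)%N -> ((x + y) %% 4 = 2)%N -> (y %% 4 = 2)%N.
Proof. lia. Qed.
Lemma ar2 (w x y : nat) : (w %% 4 = (x + y + 2) %% 4)%N -> (w %% 4 = 2)%N ->
  (x %% 4 = 2)%N -> (y %% 4 = 0)%N -> False.
Proof. lia. Qed.
Lemma ar3 (w wc n d : nat) : (d <= w)%N -> (w + 2 * wc = wc + n)%N -> (wc <= n - d)%N.
Proof. lia. Qed.

Theorem mainTheorem5 (n k d : nat) (C1 C2 : code n) :
  self_dual C1 -> singly_even C1 -> nkd_code C1 k d ->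
  self_dual C2 -> doubly_even C2 ->
  neighbors C1 C2 ->
  forall c : word n, in_dual (C1 :&: C2)%VS c -> (wt c %% 4 = 2)%N ->
    (d <= wt c)%N /\ (wt c <= n - d)%N.
Proof.
move=> sd1 [s sC1 s2] [_ [_ md]] sd2 de2 nb c cdual c2.
have o1 x y : x \in C1 -> y \in C1 -> dotw x y = 0 by move=> hx hy; exact: (proj1 (sd1 x) hx).
have o2 x y : x \in C2 -> y \in C2 -> dotw x y = 0 by move=> hx hy; exact: (proj1 (sd2 x) hx).
have h1 := sd_dim sd1; have h2 := sd_dim sd2.
set h := \dim C1 in h1.
have nE : n = (h + h)%N by lia.
have nh : n./2 = h by rewrite nE addnn doubleK.
move: nb; rewrite /neighbors nh => dC.
set C := (C1 :&: C2)%VS in dC cdual.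
have [Cp [mC dCp]] := dual_space C.
have sub : (C1 + C2 <= Cp)%VS.
  apply/subvP => x /memv_addP [u uC1 [v vC2 ->]]; apply/mC => y /memv_capP [y1 y2].
  by rewrite dotwDl o1 // o2 // addr0.
have EC : (C1 + C2)%VS = Cp.
  apply/eqP; rewrite eqEdim sub /=.
  have := dimv_sum_cap C1 C2; rewrite -/C dC dCp -/h; lia.
have : c \in Cp by apply/mC.
rewrite -EC => /memv_addP [a aC1 [b bC2 ce]].
have dec x : x \in C -> (wt x %% 4 = 0)%N by move=> /memv_capP [_ ?]; exact: de2.
have aC2 : a \notin C2.
  apply/negP => aC2; have : c \in C2 by rewrite ce memvD.
  by move/de2; rewrite c2.
have aC : a \notin C by rewrite memv_cap negb_and aC2 orbT.
have sC : s \notin C by apply/negP => /dec; rewrite s2.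
have SL := split_line (capvSl C1 C2) _ aC1 aC.
have dC' : \dim C = (\dim C1).-1 by rewrite dC -/h subn1.
have [z [kk [zC sE]]] := SL dC' s sC1.
have zC1 : z \in C1 by move: zC => /memv_capP [].
have zC2 : z \in C2 by move: zC => /memv_capP [].
have kk1 : kk = 1.
  case: (F2_cases kk) => // k0; move: sC; rewrite sE k0 scale0r addr0 zC //.
have wa : (wt a %% 4 = 2)%N.
  move: s2; rewrite sE kk1 scale1r mod4_even ?o1 // => H.
  exact: (ar1 (dec z zC) H).
have wb : (wt b %% 4 = 0)%N by exact: de2.
have ab : dotw a b = 0.
  apply/eqP/negPn/negP => /mod4_odd H; case: (ar2 H _ wa wb); by rewrite -ce.
have bC1 : b \in C1.
  apply/sd1 => y /(SL dC') [z' [k' [z'C ->]]].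
  have z'C2 : z' \in C2 by move: z'C => /memv_capP [].
  by rewrite dotwC dotwDl dotwZl o2 // ab mulr0 addr0.
have cC1 : c \in C1 by rewrite ce memvD.
have c0 : c != 0 by apply/negP => /eqP c0; move: c2; rewrite c0 wt0.
split.
  by have := md c 0 cC1 (mem0v _) c0; rewrite subr0.
have n4 : (n %% 4 = 0)%N by rewrite -(wt_all1 n); apply: de2; exact: all1_in.
have m1 : - all1 \in C1 by rewrite rpredN; exact: all1_in.
have cn : c != - all1.
  apply/negP => /eqP ce'; move: c2; rewrite ce' wtN wt_all1 n4 //.
have := md c _ cC1 m1 cn; rewrite opprK.
have := wtD c all1; rewrite ovC ov_all1 wt_all1.
move=> H1 H2; apply: ar3 H2 H1.
Qed.
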